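(* Let $N$ be a strictly reflexive object of a compact closed category $(\mathcal C,\otimes,I)$ with trivial scalars, so that $N^*\otimes N=N$ and $N\otimes N=N$, and let $\Delta,\nabla\in\mathcal C(N,N)$ be the split and merge arrows of the standard Frobenius algebra at $N=N^*\otimes N$. Then (1) $\nabla\Delta=1_N$; (2) $\Delta\nabla=1_N$ if and only if $N$ is a unit object of the one-object semi-monoidal category $(\mathcal C(N,N),\otimes)$.
   Context: Strictly reflexive: $[N\to N]=N^*\otimes N=N$ with $\mathrm{app},\mathrm{lam}$ identity arrows (and then also $N^*=N$, $N\otimes N=N$). Trivial scalars: $\mathcal C(I,I)=\{1_I\}$. The standard Frobenius algebra at $X^*\otimes X$: split $\Delta=(1_{X^*}\otimes\eta_X\otimes1_X)\circ(X^*\otimes X\cong X^*\otimes I\otimes X)$, merge $\nabla=(X^*\otimes I\otimes X\cong X^*\otimes X)\circ(1_{X^*}\otimes\epsilon_{X^*}\otimes1_X)$, here with $X=N$. A (Saavedra) unit object of a semi-monoidal category is an object $U$ with $U\cong U\otimes U$ such that $U\otimes(-)$ and $(-)\otimes U$ are fully faithful; for the one-object category $(\mathcal C(N,N),\otimes)$ this means the maps $f\mapsto1_N\otimes f$ and $f\mapsto f\otimes1_N$ on $\mathcal C(N,N)$ are bijections. *)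

(* Defs.v *)
Set Implicit Arguments.

Record CompactClosedCategory := {
  Obj : Type;
  Hom : Obj -> Obj -> Type;
  id : forall a, Hom a a;
  comp : forall {a b c}, Hom b c -> Hom a b -> Hom a c;
  comp_assoc : forall a b c d (h : Hom c d) (g : Hom b c) (f : Hom a b),
      comp h (comp g f) = comp (comp h g) f;
  comp_id_l : forall a b (f : Hom a b), comp (id b) f = f;
  comp_id_r : forall a b (f : Hom a b), comp f (id a) = f;

  unit : Obj;
  tensor : Obj -> Obj -> Obj;
  tensor_hom : forall {a b c d}, Hom a b -> Hom c d -> Hom (tensor a c) (tensor b d);
  tensor_id : forall a b, tensor_hom (id a) (id b) = id (tensor a b);
  tensor_comp : forall a b c a' b' c' (g : Hom b c) (f : Hom a b)
      (g' : Hom b' c') (f' : Hom a' b'),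
      tensor_hom (comp g f) (comp g' f') = comp (tensor_hom g g') (tensor_hom f f');

  alpha : forall a b c, Hom (tensor (tensor a b) c) (tensor a (tensor b c));
  alpha_inv : forall a b c, Hom (tensor a (tensor b c)) (tensor (tensor a b) c);
  alpha_iso1 : forall a b c, comp (alpha_inv a b c) (alpha a b c) = id _;
  alpha_iso2 : forall a b c, comp (alpha a b c) (alpha_inv a b c) = id _;
  alpha_nat : forall a a' b b' c c' (f : Hom a a') (g : Hom b b') (h : Hom c c'),
      comp (alpha a' b' c') (tensor_hom (tensor_hom f g) h)
      = comp (tensor_hom f (tensor_hom g h)) (alpha a b c);
  lambda : forall a, Hom (tensor unit a) a;
  lambda_inv : forall a, Hom a (tensor unit a);
  lambda_iso1 : forall a, comp (lambda_inv a) (lambda a) = id _;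
  lambda_iso2 : forall a, comp (lambda a) (lambda_inv a) = id _;
  lambda_nat : forall a a' (f : Hom a a'),
      comp (lambda a') (tensor_hom (id unit) f) = comp f (lambda a);
  rho : forall a, Hom (tensor a unit) a;
  rho_inv : forall a, Hom a (tensor a unit);
  rho_iso1 : forall a, comp (rho_inv a) (rho a) = id _;
  rho_iso2 : forall a, comp (rho a) (rho_inv a) = id _;
  rho_nat : forall a a' (f : Hom a a'),
      comp (rho a') (tensor_hom f (id unit)) = comp f (rho a);
  pentagon : forall a b c d,
      comp (alpha a b (tensor c d)) (alpha (tensor a b) c d)
      = comp (tensor_hom (id a) (alpha b c d))
             (comp (alpha a (tensor b c) d) (tensor_hom (alpha a b c) (id d)));
  triangle : forall a b,
      comp (tensor_hom (id a) (lambda b)) (alpha a unit b)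
      = tensor_hom (rho a) (id b);

  sigma : forall a b, Hom (tensor a b) (tensor b a);
  sigma_inv : forall a b, comp (sigma b a) (sigma a b) = id _;
  sigma_nat : forall a a' b b' (f : Hom a a') (g : Hom b b'),
      comp (sigma a' b') (tensor_hom f g) = comp (tensor_hom g f) (sigma a b);
  hexagon : forall a b c,
      comp (alpha b c a) (comp (sigma a (tensor b c)) (alpha a b c))
      = comp (tensor_hom (id b) (sigma a c))
             (comp (alpha b a c) (tensor_hom (sigma a b) (id c)));

  dual : Obj -> Obj;
  eta : forall a, Hom unit (tensor a (dual a));
  eps : forall a, Hom (tensor (dual a) a) unit;
  zigzag1 : forall a,
      comp (rho a) (comp (tensor_hom (id a) (eps a))
        (comp (alpha a (dual a) a) (comp (tensor_hom (eta a) (id a)) (lambda_inv a))))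
      = id a;
  zigzag2 : forall a,
      comp (lambda (dual a)) (comp (tensor_hom (eps a) (id (dual a)))
        (comp (alpha_inv (dual a) a (dual a))
          (comp (tensor_hom (id (dual a)) (eta a)) (rho_inv (dual a)))))
      = id (dual a)
}.

Arguments id {_}.
Arguments comp {_ _ _ _} _ _.
Arguments unit {_}.
Arguments tensor {_}.
Arguments tensor_hom {_ _ _ _ _} _ _.
Arguments lambda {_}.
Arguments lambda_inv {_}.
Arguments dual {_}.
Arguments eta {_}.
Arguments eps {_}.

Section Frobenius.
Variable C : CompactClosedCategory.

Definition castHom {a a' b b' : Obj C} (ea : a = a') (eb : b = b')
  (f : Hom C a b) : Hom C a' b' :=
  match ea in _ = x return Hom C x b' with
  | eq_refl => match eb in _ = y return Hom C a y with eq_refl => f end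
  end.

(** Strict reflexivity data: N^* = N and N (x) N = N (hence N^* (x) N = N). *)
Variables (N : Obj C) (eD : dual N = N) (eT : tensor N N = N).

Definition eDD : dual (dual N) = N := eq_trans (f_equal dual eD) eD.

Definition eDT : tensor (dual N) N = N :=
  eq_trans (f_equal (fun x => tensor x N) eD) eT.

(** X^* (x) ((X (x) X^* ) (x) X) = N, with X = X^* = N *)
Definition eBig : tensor N (tensor (tensor N N) N) = N :=
  eq_trans (f_equal (tensor N) (eq_trans (f_equal (fun x => tensor x N) eT) eT)) eT.

Definition etaN : Hom C unit (tensor N N) :=
  castHom eq_refl (f_equal (tensor N) eD) (eta N).

Definition epsNs : Hom C (tensor N N) unit :=
  castHom (f_equal2 tensor eDD eD) eq_refl (eps (dual N)).

(** split: Delta = (1_{X^*} (x) eta_X (x) 1_X) o (X^* (x) X ~= X^* (x) (I (x) X)),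
    as an arrow N -> N *)
Definition splitN : Hom C N N :=
  castHom eT eBig
    (comp (tensor_hom (id N) (tensor_hom etaN (id N)))
          (tensor_hom (id N) (lambda_inv N))).

(** merge: Nabla = (X^* (x) (I (x) X) ~= X^* (x) X ) o (1_{X^*} (x) eps_{X^*} (x) 1_X),
    as an arrow N -> N *)
Definition mergeN : Hom C N N :=
  castHom eBig eT
    (comp (tensor_hom (id N) (lambda N))
          (tensor_hom (id N) (tensor_hom epsNs (id N)))).

Definition tensorNN (f g : Hom C N N) : Hom C N N :=
  castHom eT eT (tensor_hom f g).

Definition bijective_fun {A B : Type} (F : A -> B) : Prop :=
  (forall x y, F x = F y -> x = y) /\ (forall y, exists x, F x = y).

(** (Saavedra) unit object of the one-object semi-monoidal category
    (C(N,N), (x)): its only object N satisfies N ~= N (x) N (an invertible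
    arrow of C(N,N)), and N (x) (-) and (-) (x) N are fully faithful, i.e.
    f |-> 1_N (x) f and f |-> f (x) 1_N are bijections on C(N,N). *)
Definition SaavedraUnitNN : Prop :=
  (exists u v : Hom C N N, comp u v = id N /\ comp v u = id N) /\
  bijective_fun (fun f => tensorNN (id N) f) /\
  bijective_fun (fun f => tensorNN f (id N)).

End Frobenius.

Definition trivial_scalars (C : CompactClosedCategory) : Prop :=
  forall f : Hom C unit unit, f = id unit.

Arguments splitN {C N} eD eT.
Arguments mergeN {C N} eD eT.
Arguments SaavedraUnitNN {C N} eT.
Arguments tensorNN {C N} eT f g.
Arguments castHom {C a a' b b'} ea eb f.

(* Main.v *)
Require Import Defs.
From Stdlib Require Import ProofIrrelevance.

Lemma cast_comp (C : CompactClosedCategory) (a a' b b' c c' : Obj C)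
  (ea : a = a') (eb eb' : b = b') (ec : c = c') (g : Hom C b c) (f : Hom C a b) :
  comp (castHom eb ec g) (castHom ea eb' f) = castHom ea ec (comp g f).
Proof. rewrite (proof_irrelevance _ eb' eb). destruct ea, eb, ec. reflexivity. Qed.

Lemma cast_id (C : CompactClosedCategory) (a a' : Obj C) (e e' : a = a') :
  castHom e e' (id a) = id a'.
Proof. rewrite (proof_irrelevance _ e' e). destruct e. reflexivity. Qed.

Lemma cast_cast (C : CompactClosedCategory) (a a' a'' b b' b'' : Obj C)
  (e1 : a' = a'') (e2 : b' = b'') (e3 : a = a') (e4 : b = b') (f : Hom C a b) :
  castHom e1 e2 (castHom e3 e4 f) = castHom (eq_trans e3 e1) (eq_trans e4 e2) f.
Proof. destruct e1, e2, e3, e4. reflexivity. Qed.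

Lemma cast_tl (C : CompactClosedCategory) (a a' b b' c d : Obj C)
  (ea : a = a') (eb : b = b') (f : Hom C a b) (g : Hom C c d) :
  tensor_hom (castHom ea eb f) g =
  castHom (f_equal (fun x => tensor x c) ea) (f_equal (fun x => tensor x d) eb) (tensor_hom f g).
Proof. destruct ea, eb. reflexivity. Qed.

Lemma cast_tr (C : CompactClosedCategory) (a a' b b' c d : Obj C)
  (ea : a = a') (eb : b = b') (f : Hom C a b) (g : Hom C c d) :
  tensor_hom g (castHom ea eb f) =
  castHom (f_equal (tensor c) ea) (f_equal (tensor d) eb) (tensor_hom g f).
Proof. destruct ea, eb. reflexivity. Qed.

Lemma cast_pi (C : CompactClosedCategory) (a a' b b' : Obj C)
  (ea ea' : a = a') (eb eb' : b = b') (f : Hom C a b) :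
  castHom ea eb f = castHom ea' eb' f.
Proof. rewrite (proof_irrelevance _ ea ea'), (proof_irrelevance _ eb eb'). reflexivity. Qed.

Lemma cast_refl (C : CompactClosedCategory) (a b : Obj C) (f : Hom C a b) :
  castHom eq_refl eq_refl f = f.
Proof. reflexivity. Qed.

Lemma tc (C : CompactClosedCategory) (a b c a' b' c' : Obj C) (g : Hom C b c) (f : Hom C a b)
      (g' : Hom C b' c') (f' : Hom C a' b') :
  comp (tensor_hom g g') (tensor_hom f f') = tensor_hom (comp g f) (comp g' f').
Proof. symmetry. apply tensor_comp. Qed.

Lemma part1 (C : CompactClosedCategory) (N : Obj C)
  (eD : dual N = N) (eT : tensor N N = N) (triv : trivial_scalars C) :
  comp (mergeN eD eT) (splitN eD eT) = id N.
Proof.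
  unfold mergeN, splitN. rewrite cast_comp.
  rewrite <- (comp_assoc C), (comp_assoc C _ _ _ _ (tensor_hom (id N) (tensor_hom _ _))), tc, tc, tc.
  rewrite !(comp_id_l C), tc, (triv (comp _ _)).
  rewrite (comp_id_l C), tensor_id, (comp_id_l C _ _ (lambda_inv N)), (lambda_iso2 C), tensor_id.
  apply cast_id.
Qed.

Lemma cast_comp_post (C : CompactClosedCategory) (a a' b c : Obj C)
  (ea : a = a') (g : Hom C b c) (f : Hom C a b) :
  comp g (castHom ea eq_refl f) = castHom ea eq_refl (comp g f).
Proof. destruct ea. reflexivity. Qed.

Lemma cast_comp_pre (C : CompactClosedCategory) (a b c c' : Obj C)
  (ec : c = c') (g : Hom C b c) (f : Hom C a b) :
  comp (castHom eq_refl ec g) f = castHom eq_refl ec (comp g f).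
Proof. destruct ec. reflexivity. Qed.

Lemma swap_tensor (C : CompactClosedCategory) (a b c d : Obj C) (f : Hom C a b) (g : Hom C c d) :
  comp (tensor_hom f (id d)) (tensor_hom (id a) g) = comp (tensor_hom (id b) g) (tensor_hom f (id c)).
Proof. rewrite !tc, !(comp_id_l C), !(comp_id_r C). reflexivity. Qed.


Lemma T_comp (C : CompactClosedCategory) (N : Obj C) (eT : tensor N N = N) (g f g' f' : Hom C N N) :
  tensorNN eT (comp g f) (comp g' f') = comp (tensorNN eT g g') (tensorNN eT f f').
Proof. unfold tensorNN. rewrite cast_comp, tc. reflexivity. Qed.

Lemma T_id (C : CompactClosedCategory) (N : Obj C) (eT : tensor N N = N) :
  tensorNN eT (id N) (id N) = id N.
Proof. unfold tensorNN. rewrite tensor_id. apply cast_id. Qed.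

Definition PP (C : CompactClosedCategory) (N : Obj C) (eT : tensor N N = N) (q : Hom C N unit) : Hom C N N :=
  castHom eT eq_refl (comp (lambda N) (tensor_hom q (id N))).
Definition QQ (C : CompactClosedCategory) (N : Obj C) (eT : tensor N N = N) (p : Hom C unit N) : Hom C N N :=
  castHom eq_refl eT (comp (tensor_hom p (id N)) (lambda_inv N)).
Definition PP' (C : CompactClosedCategory) (N : Obj C) (eT : tensor N N = N) (q : Hom C N unit) : Hom C N N :=
  castHom eT eq_refl (comp (rho C N) (tensor_hom (id N) q)).
Definition QQ' (C : CompactClosedCategory) (N : Obj C) (eT : tensor N N = N) (p : Hom C unit N) : Hom C N N :=
  castHom eq_refl eT (comp (tensor_hom (id N) p) (rho_inv C N)).

Arguments PP {C N} eT q. Arguments QQ {C N} eT p. Arguments PP' {C N} eT q. Arguments QQ' {C N} eT p.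

Lemma PQ (C : CompactClosedCategory) (N : Obj C) (eT : tensor N N = N) (triv : trivial_scalars C)
  (p : Hom C unit N) (q : Hom C N unit) : comp (PP eT q) (QQ eT p) = id N.
Proof.
  unfold PP, QQ. rewrite cast_comp.
  rewrite <- (comp_assoc C), (comp_assoc C _ _ _ _ (tensor_hom q _)), tc, (triv (comp q p)),
    (comp_id_l C), tensor_id, (comp_id_l C), (lambda_iso2 C). reflexivity.
Qed.

Lemma PQ' (C : CompactClosedCategory) (N : Obj C) (eT : tensor N N = N) (triv : trivial_scalars C)
  (p : Hom C unit N) (q : Hom C N unit) : comp (PP' eT q) (QQ' eT p) = id N.
Proof.
  unfold PP', QQ'. rewrite cast_comp.
  rewrite <- (comp_assoc C), (comp_assoc C _ _ _ _ (tensor_hom _ q)), tc, (triv (comp q p)),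
    (comp_id_l C), tensor_id, (comp_id_l C), (rho_iso2 C). reflexivity.
Qed.

Lemma PL (C : CompactClosedCategory) (N : Obj C) (eT : tensor N N = N)
  (q : Hom C N unit) (f : Hom C N N) : comp (PP eT q) (tensorNN eT (id N) f) = comp f (PP eT q).
Proof.
  unfold PP, tensorNN. rewrite cast_comp, cast_comp_post. f_equal.
  rewrite <- (comp_assoc C), swap_tensor, (comp_assoc C), (lambda_nat C), (comp_assoc C). reflexivity.
Qed.

Lemma lambda_inv_nat (C : CompactClosedCategory) (a a' : Obj C) (f : Hom C a a') :
  comp (tensor_hom (id unit) f) (lambda_inv a) = comp (lambda_inv a') f.
Proof.
  rewrite <- (comp_id_l C _ _ (comp (tensor_hom (id unit) f) (lambda_inv a))).
  rewrite <- (lambda_iso1 C a'), <- (comp_assoc C), (comp_assoc C _ _ _ _ (lambda a')).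
  rewrite (lambda_nat C), <- (comp_assoc C), (lambda_iso2 C), (comp_id_r C). reflexivity.
Qed.

Lemma rho_inv_nat (C : CompactClosedCategory) (a a' : Obj C) (f : Hom C a a') :
  comp (tensor_hom f (id unit)) (rho_inv C a) = comp (rho_inv C a') f.
Proof.
  rewrite <- (comp_id_l C _ _ (comp (tensor_hom f (id unit)) (rho_inv C a))).
  rewrite <- (rho_iso1 C a'), <- (comp_assoc C), (comp_assoc C _ _ _ _ (rho C a')).
  rewrite (rho_nat C), <- (comp_assoc C), (rho_iso2 C), (comp_id_r C). reflexivity.
Qed.

Lemma LQ (C : CompactClosedCategory) (N : Obj C) (eT : tensor N N = N)
  (p : Hom C unit N) (f : Hom C N N) : comp (tensorNN eT (id N) f) (QQ eT p) = comp (QQ eT p) f.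
Proof.
  unfold QQ, tensorNN. rewrite cast_comp, cast_comp_pre. f_equal.
  rewrite (comp_assoc C), <- swap_tensor, <- !(comp_assoc C), lambda_inv_nat. reflexivity.
Qed.

Lemma PR' (C : CompactClosedCategory) (N : Obj C) (eT : tensor N N = N)
  (q : Hom C N unit) (f : Hom C N N) : comp (PP' eT q) (tensorNN eT f (id N)) = comp f (PP' eT q).
Proof.
  unfold PP', tensorNN. rewrite cast_comp, cast_comp_post. f_equal.
  rewrite <- (comp_assoc C), <- swap_tensor, (comp_assoc C), (rho_nat C), (comp_assoc C). reflexivity.
Qed.

Lemma RQ' (C : CompactClosedCategory) (N : Obj C) (eT : tensor N N = N)
  (p : Hom C unit N) (f : Hom C N N) : comp (tensorNN eT f (id N)) (QQ' eT p) = comp (QQ' eT p) f.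
Proof.
  unfold QQ', tensorNN. rewrite cast_comp, cast_comp_pre. f_equal.
  rewrite (comp_assoc C), swap_tensor, <- !(comp_assoc C), rho_inv_nat. reflexivity.
Qed.

Lemma QP (C : CompactClosedCategory) (N : Obj C) (eT : tensor N N = N)
  (p : Hom C unit N) (q : Hom C N unit) :
  comp (QQ eT p) (PP eT q) = tensorNN eT (comp p q) (id N).
Proof.
  unfold QQ, PP, tensorNN. rewrite cast_comp.
  rewrite <- (comp_assoc C), (comp_assoc C _ _ _ _ (lambda_inv N)), (lambda_iso1 C), (comp_id_l C), tc, (comp_id_l C).
  reflexivity.
Qed.

Lemma Dform (C : CompactClosedCategory) (N : Obj C)
  (eD : dual N = N) (eT : tensor N N = N) :
  comp (splitN eD eT) (mergeN eD eT) =
  tensorNN eT (id N) (tensorNN eT (comp (castHom eq_refl eT (etaN C eD)) (castHom eT eq_refl (epsNs C eD))) (id N)).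
Proof.
  unfold splitN, mergeN, tensorNN. rewrite !cast_comp, cast_tl, cast_cast, cast_tr, cast_cast.
  match goal with |- _ = castHom ?a ?b ?f => rewrite (cast_pi _ _ _ _ _ a (@eBig C N eT) b (@eBig C N eT) f) end. f_equal.
  rewrite <- (comp_assoc C), (comp_assoc C _ _ _ _ (tensor_hom (id N) (lambda_inv N))), tc, (lambda_iso1 C),
    (comp_id_l C), tensor_id, (comp_id_l C), tc, (comp_id_l C), tc, (comp_id_l C). reflexivity.
Qed.

Lemma QP' (C : CompactClosedCategory) (N : Obj C) (eT : tensor N N = N)
  (p : Hom C unit N) (q : Hom C N unit) :
  comp (QQ' eT p) (PP' eT q) = tensorNN eT (id N) (comp p q).
Proof.
  unfold QQ', PP', tensorNN. rewrite cast_comp.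
  rewrite <- (comp_assoc C), (comp_assoc C _ _ _ _ (rho_inv C N)), (rho_iso1 C), (comp_id_l C), tc, (comp_id_l C).
  reflexivity.
Qed.

Lemma retL (C : CompactClosedCategory) (N : Obj C) (eT : tensor N N = N) (triv : trivial_scalars C)
  (p : Hom C unit N) (q : Hom C N unit) (x : Hom C N N) :
  comp (comp (PP eT q) (tensorNN eT (id N) x)) (QQ eT p) = x.
Proof. rewrite PL, <- (comp_assoc C), PQ, (comp_id_r C) by exact triv. reflexivity. Qed.

Lemma retR (C : CompactClosedCategory) (N : Obj C) (eT : tensor N N = N) (triv : trivial_scalars C)
  (p : Hom C unit N) (q : Hom C N unit) (x : Hom C N N) :
  comp (comp (PP' eT q) (tensorNN eT x (id N))) (QQ' eT p) = x.
Proof. rewrite PR', <- (comp_assoc C), PQ', (comp_id_r C) by exact triv. reflexivity. Qed.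

Lemma convL (C : CompactClosedCategory) (N : Obj C) (eT : tensor N N = N)
  (p : Hom C unit N) (q : Hom C N unit) (x : Hom C N N) :
  comp (QQ eT p) (PP eT q) = id N ->
  tensorNN eT (id N) x = comp (comp (QQ eT p) x) (PP eT q).
Proof.
  intro H. transitivity (comp (tensorNN eT (id N) x) (comp (QQ eT p) (PP eT q))).
  { rewrite H, (comp_id_r C). reflexivity. }
  rewrite (comp_assoc C), LQ. reflexivity.
Qed.

Lemma convR (C : CompactClosedCategory) (N : Obj C) (eT : tensor N N = N)
  (p : Hom C unit N) (q : Hom C N unit) (x : Hom C N N) :
  comp (QQ' eT p) (PP' eT q) = id N ->
  tensorNN eT x (id N) = comp (comp (QQ' eT p) x) (PP' eT q).
Proof.
  intro H. transitivity (comp (tensorNN eT x (id N)) (comp (QQ' eT p) (PP' eT q))).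
  { rewrite H, (comp_id_r C). reflexivity. }
  rewrite (comp_assoc C), RQ'. reflexivity.
Qed.

Theorem mainTheorem10 (C : CompactClosedCategory) (N : Obj C)
  (eD : dual N = N) (eT : tensor N N = N)
  (triv : trivial_scalars C) :
  comp (mergeN eD eT) (splitN eD eT) = id N /\
  (comp (splitN eD eT) (mergeN eD eT) = id N <-> SaavedraUnitNN eT).
Proof.
  split; [apply part1; exact triv|].
  rewrite Dform.
  set (p := castHom eq_refl eT (etaN C eD)).
  set (q := castHom eT eq_refl (epsNs C eD)).
  clearbody p q.
  split.
  - intro H.
    assert (H1 : tensorNN eT (comp p q) (id N) = id N).
    { rewrite <- (retL C N eT triv p q (tensorNN eT (comp p q) (id N))), H, (comp_id_r C).
      apply PQ; exact triv. }
    assert (H2 : comp p q = id N).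
    { rewrite <- (retR C N eT triv p q (comp p q)), H1, (comp_id_r C). apply PQ'; exact triv. }
    assert (HQP : comp (QQ eT p) (PP eT q) = id N) by (rewrite QP, H2; apply T_id).
    assert (HQP' : comp (QQ' eT p) (PP' eT q) = id N) by (rewrite QP', H2; apply T_id).
    split; [exists (id N), (id N); split; apply (comp_id_l C)|].
    split; split.
    + intros x y Hxy. rewrite <- (retL C N eT triv p q x), <- (retL C N eT triv p q y). simpl in Hxy.
      rewrite Hxy. reflexivity.
    + intro y. exists (comp (comp (PP eT q) y) (QQ eT p)). simpl.
      rewrite (convL C N eT p q _ HQP), !(comp_assoc C), HQP, (comp_id_l C),
        <- (comp_assoc C), HQP, (comp_id_r C). reflexivity.
    + intros x y Hxy. rewrite <- (retR C N eT triv p q x), <- (retR C N eT triv p q y). simpl in Hxy.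
      rewrite Hxy. reflexivity.
    + intro y. exists (comp (comp (PP' eT q) y) (QQ' eT p)). simpl.
      rewrite (convR C N eT p q _ HQP'), !(comp_assoc C), HQP', (comp_id_l C),
        <- (comp_assoc C), HQP', (comp_id_r C). reflexivity.
  - intros [_ [[_ Ls] _]].
    destruct (Ls (comp (QQ eT p) (PP eT q))) as [g Hg]. simpl in Hg.
    assert (Hg1 : g = id N).
    { rewrite <- (retL C N eT triv p q g), Hg, !(comp_assoc C), PQ by exact triv.
      rewrite (comp_id_l C). apply PQ; exact triv. }
    rewrite <- QP, <- Hg, Hg1, T_id. apply T_id.
Qed.
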